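(* Let $\mathcal{O}$ be an order in a number field $K$, let $\mathfrak{d}\subseteq\mathfrak{m}\subseteq\mathcal{O}$ be nonzero integral ideals, and let $\Sigma$ be any (possibly empty) set of real places of $K$. Then the inclusion $J^*_{\mathfrak{d}}(\mathcal{O})\subseteq J^*_{\mathfrak{m}}(\mathcal{O})$ induces an isomorphism $$\mathrm{Cl}_{\mathfrak{m},\Sigma}(\mathcal{O})=\frac{J^*_{\mathfrak{d}}(\mathcal{O})}{P^{\mathfrak{d}}_{\mathfrak{m},\Sigma}(\mathcal{O})}.$$
   Context: An order is a subring of $K$ containing $1$, free of rank $[K:\mathbb Q]$ over $\mathbb Z$. A fractional $\mathcal O$-ideal is an $\mathcal O$-submodule $\mathfrak a\subseteq K$ with $\lambda\mathfrak a\subseteq\mathcal O$ for some $\lambda\in K^\times$, invertible if $\mathfrak a\mathfrak b=\mathcal O$ for some fractional $\mathfrak b$; it is coprime to an integral ideal $\mathfrak c$ if $\mathfrak a=(\mathfrak a_1:\mathfrak b_1)=\{x\in K:x\mathfrak b_1\subseteq\mathfrak a_1\}$ with $\mathfrak a_1$ integral, $\mathfrak b_1$ invertible integral, both coprime to $\mathfrak c$ (sum equal to $\mathcal O$). $J^*_{\mathfrak c}(\mathcal O)$ is the group of invertible fractional ideals coprime to $\mathfrak c$. For $\alpha\in K$, $\alpha\equiv1\pmod{\mathfrak m}$ means $\alpha-1\in\mathfrak m\mathcal O[S_{\mathfrak m}^{-1}]$, $S_{\mathfrak m}=\{a\in\mathcal O:a\mathcal O+\mathfrak m=\mathcal O\}$.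 $P_{\mathfrak m,\Sigma}(\mathcal O)=\{\alpha\mathcal O:\alpha\in K^\times,\alpha\equiv1\pmod{\mathfrak m},\rho(\alpha)>0\ \forall\rho\in\Sigma\}$, $\mathrm{Cl}_{\mathfrak m,\Sigma}(\mathcal O)=J^*_{\mathfrak m}(\mathcal O)/P_{\mathfrak m,\Sigma}(\mathcal O)$, and $P^{\mathfrak d}_{\mathfrak m,\Sigma}(\mathcal O)$ is the subgroup of those $\alpha\mathcal O\in P_{\mathfrak m,\Sigma}(\mathcal O)$ with $\alpha\mathcal O$ coprime to $\mathfrak d$. *)

(* Defs.v *)
(* number field K = finite-dimensional field extension of rat. *)
From HB Require Import structures.
From mathcomp Require Import all_boot all_order all_algebra all_field.
From mathcomp Require Import reals.
Set Implicit Arguments. Unset Strict Implicit. Unset Printing Implicit Defensive.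
Import Order.TTheory GRing.Theory Num.Theory.
Local Open Scope ring_scope.

Section Defs.
Variable K : fieldExtType rat.

Definition sub_eq (a b : K -> Prop) := forall x, a x <-> b x.
Definition sub_incl (a b : K -> Prop) := forall x, a x -> b x.

(* An order: a subring of K containing 1, free of rank [K:Q] over Z. *)
Definition is_order (O : K -> Prop) : Prop :=
  [/\ O 1,
      (forall x y, O x -> O y -> O (x - y)),
      (forall x y, O x -> O y -> O (x * y)) &
      exists b : 'I_(\dim {:K}) -> K,
        (forall x, O x <-> exists z : 'I_(\dim {:K}) -> int, x = \sum_i b i *~ z i) /\
        (forall z : 'I_(\dim {:K}) -> int, \sum_i b i *~ z i = 0 -> forall i, z i = 0)].

Definition is_submodule (O a : K -> Prop) : Prop :=
  [/\ a 0, (forall x y, a x -> a y -> a (x + y)) &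
      (forall r x, O r -> a x -> a (r * x))].

Definition is_frac_ideal (O a : K -> Prop) : Prop :=
  is_submodule O a /\ exists l : K, l != 0 /\ forall x, a x -> O (l * x).

Definition is_int_ideal (O a : K -> Prop) : Prop :=
  is_submodule O a /\ sub_incl a O.

Definition ideal_mul (a b : K -> Prop) : K -> Prop :=
  fun z => exists n (x y : 'I_n -> K),
    (forall i, a (x i) /\ b (y i)) /\ z = \sum_(i < n) x i * y i.

Definition ideal_add (a b : K -> Prop) : K -> Prop :=
  fun z => exists x y, a x /\ b y /\ z = x + y.

Definition ideal_colon (a b : K -> Prop) : K -> Prop :=
  fun x => forall y, b y -> a (x * y).

Definition principal (O : K -> Prop) (alpha : K) : K -> Prop :=
  fun z => exists x, O x /\ z = alpha * x.

Definition invertible (O a : K -> Prop) : Prop :=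
  is_frac_ideal O a /\ exists b, is_frac_ideal O b /\ sub_eq (ideal_mul a b) O.

Definition coprime_int (O a c : K -> Prop) : Prop := sub_eq (ideal_add a c) O.

Definition coprime_frac (O a c : K -> Prop) : Prop :=
  exists a1 b1, [/\ is_int_ideal O a1, is_int_ideal O b1 /\ invertible O b1,
                    coprime_int O a1 c, coprime_int O b1 c &
                    sub_eq a (ideal_colon a1 b1)].

Definition Jstar (O c a : K -> Prop) : Prop :=
  is_frac_ideal O a /\ invertible O a /\ coprime_frac O a c.

Definition S_of (O m : K -> Prop) : K -> Prop :=
  fun a => O a /\ coprime_int O (principal O a) m.

Definition localization (O m : K -> Prop) : K -> Prop :=
  fun z => exists x s, O x /\ S_of O m s /\ z = x / s.

Definition congr1 (O m : K -> Prop) (alpha : K) : Prop :=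
  ideal_mul m (localization O m) (alpha - 1).

(* P_{m,Σ}(O); real places given as real embeddings K -> R *)
Definition Pray (O m : K -> Prop) (R : realType) (Sigma : {rmorphism K -> R} -> Prop)
  (a : K -> Prop) : Prop :=
  exists alpha : K, [/\ alpha != 0, congr1 O m alpha,
                        (forall rho, Sigma rho -> 0 < rho alpha) &
                        sub_eq a (principal O alpha)].

Definition Pray_d (O m d : K -> Prop) (R : realType) (Sigma : {rmorphism K -> R} -> Prop)
  (a : K -> Prop) : Prop :=
  Pray O m Sigma a /\ coprime_frac O a d.

End Defs.

(* Main.v *)
Require Import Defs.
From HB Require Import structures.
From mathcomp Require Import all_boot all_order all_algebra all_field.
From mathcomp Require Import reals.
From mathcomp Require Import ring lra zify.
From Stdlib Require Import ClassicalEpsilon Classical.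
Import Order.TTheory GRing.Theory Num.Theory.
Local Open Scope ring_scope.
Set Implicit Arguments. Unset Strict Implicit. Unset Printing Implicit Defensive.
Section Basics.
Variable K : fieldExtType rat.
Variable O : K -> Prop.
Hypothesis HO : is_order O.

Lemma O1 : O 1. Proof. by case: HO. Qed.
Lemma OB x y : O x -> O y -> O (x - y). Proof. by case: HO => _ H _ _; apply: H. Qed.
Lemma OM x y : O x -> O y -> O (x * y). Proof. by case: HO => _ _ H _; apply: H. Qed.
Lemma O0 : O 0. Proof. by rewrite -(subrr 1); apply: OB; apply: O1. Qed.
Lemma ON x : O x -> O (- x). Proof. by move=> Ox; rewrite -sub0r; apply: OB => //; apply: O0. Qed.
Lemma OD x y : O x -> O y -> O (x + y).
Proof. by move=> Ox Oy; rewrite -(opprK y); apply: OB => //; apply: ON. Qed.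
Lemma On (n : nat) : O n%:R.
Proof. elim: n => [|n IH]; first exact: O0. by rewrite mulrS; apply: OD => //; apply: O1. Qed.
Lemma Oz (z : int) : O z%:~R.
Proof. case: z => n; first by rewrite -pmulrn; apply: On.
by rewrite NegzE mulrNz; apply: ON; rewrite -pmulrn; apply: On. Qed.
Lemma Osum I (r : seq I) (P : pred I) (F : I -> K) :
  (forall i, P i -> O (F i)) -> O (\sum_(i <- r | P i) F i).
Proof. move=> H; elim/big_rec: _ => [|i x Pi Ox]; [exact: O0| exact: OD (H _ Pi) Ox]. Qed.

Lemma O_submod : is_submodule O O.
Proof. split; [exact: O0 | exact: OD | move=> r x; exact: OM]. Qed.

Section Sub.
Variable a : K -> Prop.
Hypothesis Ha : is_submodule O a.
Lemma sm0 : a 0. Proof. by case: Ha. Qed.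
Lemma smD x y : a x -> a y -> a (x + y). Proof. by case: Ha => _ H _; apply: H. Qed.
Lemma smM r x : O r -> a x -> a (r * x). Proof. by case: Ha => _ _ H; apply: H. Qed.
Lemma smMr r x : O r -> a x -> a (x * r). Proof. by rewrite mulrC; apply: smM. Qed.
Lemma smN x : a x -> a (- x).
Proof. by move=> ax; rewrite -mulN1r; apply: smM => //; apply: ON; apply: O1. Qed.
Lemma smB x y : a x -> a y -> a (x - y). Proof. by move=> ax ay; apply: smD => //; apply: smN. Qed.
Lemma smsum I (r : seq I) (P : pred I) (F : I -> K) :
  (forall i, P i -> a (F i)) -> a (\sum_(i <- r | P i) F i).
Proof. move=> H; elim/big_rec: _ => [|i x Pi Ox]; [exact: sm0| exact: smD (H _ Pi) Ox]. Qed.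
Lemma smz x (z : int) : a x -> a (x *~ z).
Proof. by move=> ax; rewrite -mulrzr; apply: smMr => //; apply: Oz. Qed.
End Sub.

Lemma mul1_in (a b : K -> Prop) x y : a x -> b y -> ideal_mul a b (x * y).
Proof.
move=> ax by_; exists 1%N, (fun _ => x), (fun _ => y); split => //.
by rewrite big_ord1.
Qed.

Lemma ideal_mulC (a b : K -> Prop) z : ideal_mul a b z -> ideal_mul b a z.
Proof.
case=> n [x [y [H ->]]]; exists n, y, x; split; first by move=> i; case: (H i).
by apply: eq_bigr => i _; rewrite mulrC.
Qed.

Lemma ideal_mul_sub (a b c : K -> Prop) : is_submodule O c ->
  (forall x y, a x -> b y -> c (x * y)) -> forall z, ideal_mul a b z -> c z.
Proof.
move=> Hc H z [n [x [y [Hxy ->]]]]; apply: smsum => // i _.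
by case: (Hxy i) => ?; apply: H.
Qed.

Lemma inv_colon (a a' : K -> Prop) y : is_submodule O a' ->
  sub_eq (ideal_mul a a') O -> (forall x, a x -> O (y * x)) -> a' y.
Proof.
move=> Ha' Hinv Hy; have := (Hinv 1).2 O1.
case=> n [x [z [Hxz E]]].
have -> : y = \sum_(i < n) (y * x i) * z i.
  by rewrite -{1}[y]mulr1 {1}E mulr_sumr; apply: eq_bigr => i _; rewrite mulrA.
apply: smsum => // i _; case: (Hxz i) => ax az; apply: smM => //; exact: Hy.
Qed.

Lemma submod_int_ideal_O : is_int_ideal O O.
Proof. by split; [exact: O_submod | move=> x]. Qed.

End Basics.
Section Easy.
Variable K : fieldExtType rat.
Variable O : K -> Prop.
Hypothesis HO : is_order O.

Lemma coprime_int_mono (a1 d m : K -> Prop) :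
  is_int_ideal O a1 -> is_int_ideal O m -> sub_incl d m ->
  coprime_int O a1 d -> coprime_int O a1 m.
Proof.
move=> [_ Ha1] [_ Hm] Hdm H z; split.
  by case=> x [y [ax [my ->]]]; apply: (OD HO); [apply: Ha1 | apply: Hm].
by move=> /(H z).2 [x [y [ax [dy ->]]]]; exists x, y; split => //; split => //; apply: Hdm.
Qed.

Lemma coprime_frac_mono (a d m : K -> Prop) :
  is_int_ideal O m -> sub_incl d m -> coprime_frac O a d -> coprime_frac O a m.
Proof.
move=> Hm Hdm [a1 [b1 [Ha1 [Hb1 Hb1i] Ha1d Hb1d Heq]]].
exists a1, b1; split => //; apply: coprime_int_mono Hdm _ => //.
Qed.

Lemma principal_submod alpha : is_submodule O (principal O alpha).
Proof.
split; first by exists 0; split; [exact: (O0 HO) | rewrite mulr0].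
  by move=> _ _ [x [Ox ->]] [y [Oy ->]]; exists (x + y); split; [exact: OD | rewrite mulrDr].
by move=> r _ Or [x [Ox ->]]; exists (r * x); split; [exact: OM | rewrite mulrCA].
Qed.

Lemma principal_frac alpha : alpha != 0 -> is_frac_ideal O (principal O alpha).
Proof.
move=> a0; split; first exact: principal_submod.
exists alpha^-1; split; first by rewrite invr_eq0.
by move=> _ [x [Ox ->]]; rewrite mulrA mulVf // mul1r.
Qed.

Lemma principal_inv alpha : alpha != 0 -> invertible O (principal O alpha).
Proof.
move=> a0; split; first exact: principal_frac.
exists (principal O alpha^-1); split; first by apply: principal_frac; rewrite invr_eq0.
move=> z; split.
  apply: (ideal_mul_sub (O_submod HO)).
  move=> _ _ [x [Ox ->]] [y [Oy ->]].
  by rewrite mulrACA mulfV // mul1r; apply: OM.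
move=> Oz; have -> : z = (alpha * z) * (alpha^-1 * 1).
  by rewrite mulr1 mulrAC mulfV // mul1r.
by apply: mul1_in; [exists z | exists 1; split => //; exact: O1].
Qed.

End Easy.
Lemma clear_den n (k : 'I_n -> rat) :
  exists D : int, D != 0 /\ exists z : 'I_n -> int, forall i, D%:~R * k i = (z i)%:~R.
Proof.
exists (\prod_i denq (k i)); split.
  by rewrite prodf_seq_neq0; apply/allP => i _; rewrite denq_neq0.
exists (fun i => (\prod_(j | j != i) denq (k j)) * numq (k i)) => i.
rewrite (bigD1 i) //= !intrM numqE; ring.
Qed.

Section Span.
Variable K : fieldExtType rat.
Variable O : K -> Prop.
Hypothesis HO : is_order O.

Lemma order_Qspan x : exists N : int, N != 0 /\ O (N%:~R * x).
Proof.
case: HO => _ _ _ [b [Hb Hind]].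
pose n := \dim {:K}.
pose X : n.-tuple K := mktuple b.
have Xi (i : 'I_n) : X`_i = b i by rewrite /X -tnth_nth tnth_mktuple.
have freeX : free X.
  apply/freeP => k Hk i.
  have [D [D0 [z Hz]]] := clear_den k.
  have : \sum_i b i *~ z i = (D%:~R : rat) *: \sum_i k i *: X`_i.
    rewrite scaler_sumr; apply: eq_bigr => j _.
    by rewrite -scaler_int -Hz Xi scalerA.
  rewrite Hk scaler0 => /Hind /(_ i) zi0; move: (Hz i); rewrite zi0 => /eqP.
  by rewrite mulf_eq0 intr_eq0 (negbTE D0) /= => /eqP.
have basX : basis_of fullv X.
  by rewrite basisEfree freeX subvf size_tuple leqnn.
have xX : x \in <<X>>%VS by rewrite (span_basis basX) memvf.
have Ex := coord_span xX.
have [D [D0 [z Hz]]] := clear_den (fun i => coord X i x).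
exists D; split => //; apply/(Hb _).2; exists z.
rewrite {1}Ex mulr_sumr; apply: eq_bigr => i _.
by rewrite Xi -[RHS]scaler_int -Hz -scalerA scaler_int mulrzl.
Qed.

End Span.
Section Finite.
Variable K : fieldExtType rat.
Variable O : K -> Prop.
Hypothesis HO : is_order O.

Lemma int_in_ideal (d : K -> Prop) x : is_int_ideal O d -> d x -> x != 0 ->
  exists N : int, 0 < N /\ d N%:~R.
Proof.
move=> [Hd _] dx x0; have [N [N0 ON]] := order_Qspan HO x^-1.
have dN : d N%:~R.
  have -> : (N%:~R : K) = (N%:~R * x^-1) * x by rewrite -mulrA mulVf // mulr1.
  exact: (smM Hd ON dx).
exists (N * N); split; first by move: N0 => /eqP N0; nia.
by rewrite intrM; apply: (smM Hd) => //; apply: Oz.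
Qed.

Definition congd (d : K -> Prop) x y := d (x - y).

Lemma pigeon_pow (d : K -> Prop) (N : int) z : is_int_ideal O d -> 0 < N -> d N%:~R -> O z ->
  exists i j, (i < j)%N /\ congd d (z ^+ i) (z ^+ j).
Proof.
move=> [Hd dO] N0 dN Oz.
case: (HO) => _ _ _ [b [Hb Hind]].
pose n := \dim {:K}.
have Opow k : O (z ^+ k).
  elim: k => [|k IH]; [by rewrite expr0; apply: O1 | by rewrite exprS; apply: OM].
have Hc k : exists c : 'I_n -> int, z ^+ k = \sum_i b i *~ c i by apply/(Hb _).1.
pose f k := proj1_sig (constructive_indefinite_description _ (Hc k)).
have Hf k : z ^+ k = \sum_i b i *~ f k i by rewrite /f; case: constructive_indefinite_description.
pose Nn := `|N|%N.
pose T := {ffun 'I_n -> 'I_Nn.+1}.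
pose r (k : 'I_#|T|.+1) : T := [ffun l => inord `|(f k l %% N)%Z|%N].
have : ~~ injectiveb r.
  apply/negP => /injectiveP /leq_card; rewrite card_ord ltnn //.
case/injectivePn => i [j] ij rij.
have Hmod l : (f i l %% N)%Z = (f j l %% N)%Z.
  move/ffunP: rij => /(_ l); rewrite !ffunE => /(congr1 val).
  have N0' : N != 0 by rewrite gt_eqF.
  have lt (x : int) : (`|(x %% N)%Z|%N < Nn.+1)%N.
    apply: (@leq_trans Nn); last exact: leqnSn.
    rewrite -ltz_nat gez0_abs ?modz_ge0 //.
    by rewrite /Nn gez0_abs ?ltz_pmod // ltW.
  rewrite /= !inordK // => /(congr1 Posz); rewrite !abszE !ger0_norm ?modz_ge0 //.
have key (k1 k2 : 'I_#|T|.+1) : (forall l, (f k1 l %% N)%Z = (f k2 l %% N)%Z) ->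
   congd d (z ^+ k1) (z ^+ k2).
  move=> Hm; rewrite /congd (Hf k1) (Hf k2) -sumrB.
  have -> : \sum_l (b l *~ f k1 l - b l *~ f k2 l) =
            N%:~R * \sum_l b l *~ ((f k1 l %/ N)%Z - (f k2 l %/ N)%Z).
    rewrite mulr_sumr; apply: eq_bigr => l _.
    rewrite -mulrzBr mulrzl -mulrzA; congr (_ *~ _).
    rewrite {1}(divz_eq (f k1 l) N) {1}(divz_eq (f k2 l) N) Hm; ring.
  apply: (smMr Hd) => //; apply/(Hb _).2; by eexists.
case: (ltngtP i j) => [lt|lt|/val_inj eq]; last by rewrite eq eqxx in ij.
  by exists i, j; split => //; apply: key.
exists j, i; split => //; apply: key => l; by rewrite Hmod.
Qed.

End Finite.
Section Idem.
Variable K : fieldExtType rat.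
Variable O : K -> Prop.
Hypothesis HO : is_order O.

Lemma Opow z k : O z -> O (z ^+ k).
Proof.
move=> Oz; elim: k => [|k IH]; [by rewrite expr0; apply: O1 | by rewrite exprS; apply: OM].
Qed.

Lemma idem_pow (d : K -> Prop) (N : int) z : is_int_ideal O d -> 0 < N -> d N%:~R -> O z ->
  exists k, (0 < k)%N /\ d (z ^+ (k + k) - z ^+ k).
Proof.
move=> Hd0 N0 dN Oz; have [Hd dO] := Hd0.
have [i [j [ij Hij]]] := pigeon_pow HO Hd0 N0 dN Oz.
pose p := (j - i)%N.
have p0 : (0 < p)%N by rewrite /p subn_gt0.
have jE : j = (i + p)%N by rewrite /p subnKC // ltnW.
have step l c : d (z ^+ (i + l) - z ^+ (i + l + c * p)).
  elim: c => [|c IH]; first by rewrite mul0n addn0 subrr; apply: (sm0 Hd).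
  have -> : z ^+ (i + l) - z ^+ (i + l + c.+1 * p) =
     (z ^+ (i + l) - z ^+ (i + l + c * p)) + z ^+ (l + c * p) * (z ^+ i - z ^+ j).
    rewrite jE mulrBr -!exprD.
    have -> : (l + c * p + i = i + l + c * p)%N by lia.
    have -> : (l + c * p + (i + p) = i + l + c.+1 * p)%N by rewrite mulSn; lia.
    by rewrite addrA subrK.
  by apply: (smD Hd) => //; apply: (smM Hd); [apply: Opow | exact: Hij].
exists (p * i.+1)%N; split; first by rewrite muln_gt0 p0.
have := step (p * i.+1 - i)%N i.+1.
have -> : (i + (p * i.+1 - i) = p * i.+1)%N by rewrite subnKC //; nia.
have -> : (p * i.+1 + i.+1 * p = p * i.+1 + p * i.+1)%N by rewrite mulnC.
by move=> /(smN HO Hd); rewrite opprB.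
Qed.
End Idem.
Section Core.
Variable K : fieldExtType rat.
Variable O : K -> Prop.
Hypothesis HO : is_order O.
Variable d : K -> Prop.
Hypothesis Hd0 : is_int_ideal O d.

Let Hd : is_submodule O d. Proof. by case: Hd0. Qed.
Let dO : sub_incl d O. Proof. by case: Hd0. Qed.

Lemma idem_mul x y : O x -> O y -> d (x * x - x) -> d (y * y - y) ->
  d ((x * y) * (x * y) - x * y).
Proof.
move=> Ox Oy dx dy.
have -> : (x * y) * (x * y) - x * y = (x * x - x) * (y * y) + x * (y * y - y) by ring.
apply: (smD Hd); first by apply: (smMr Hd) => //; apply: OM.
exact: (smM Hd).
Qed.

Lemma idem_compl x : d (x * x - x) -> d ((1 - x) * (1 - x) - (1 - x)).
Proof. by have -> : (1 - x) * (1 - x) - (1 - x) = x * x - x by ring. Qed.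

Lemma Oprod (g : nat -> K) p : (forall l, O (g l)) -> O (\prod_(l < p) g l).
Proof.
move=> Og; elim: p => [|p IH]; first by rewrite big_ord0; apply: O1.
by rewrite big_ord_recr /=; apply: OM.
Qed.

Lemma Oprod_cond (I : finType) (P : pred I) (g : I -> K) : (forall l, O (g l)) ->
  O (\prod_(l | P l) g l).
Proof.
move=> Og; elim/big_rec: _ => [|i x0 _ Ox]; first exact: (O1 HO).
exact: (OM HO).
Qed.

Lemma idem_prod (g : nat -> K) p : (forall l, O (g l)) -> (forall l, d (g l * g l - g l)) ->
  d ((\prod_(l < p) (1 - g l)) * (\prod_(l < p) (1 - g l)) - \prod_(l < p) (1 - g l)).
Proof.
move=> Og dg; elim: p => [|p IH].
  by rewrite big_ord0 mulr1 subrr; apply: (sm0 Hd).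
rewrite big_ord_recr /=; apply: idem_mul => //.
- by apply: (@Oprod (fun l => 1 - g l)) => i; apply: (OB HO); [apply: O1 | apply: Og].
- by apply: (OB HO); [apply: O1 | apply: Og].
- exact: (idem_compl (dg p)).
Qed.

Lemma idem_pow_cong x k : O x -> d (x * x - x) -> (0 < k)%N -> d (x ^+ k - x).
Proof.
move=> Ox dx; elim: k => [//|k IH] _; case: k IH => [|k] IH; first by rewrite expr1 subrr; apply: (sm0 Hd).
have -> : x ^+ k.+2 - x = x * (x ^+ k.+1 - x) + (x * x - x) by rewrite exprS; ring.
by apply: (smD Hd) => //; apply: (smM Hd) => //; apply: IH.
Qed.

Lemma nil_add x y p q : O x -> O y -> d (x ^+ p) -> d (y ^+ q) -> d ((x + y) ^+ (p + q)).
Proof.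
move=> Ox Oy dx dy; rewrite exprDn; apply: (smsum Hd) => [[i /= ilt]] _.
rewrite -mulr_natr; apply: (smMr Hd); first exact: On.
have [qi|iq] := leqP q i.
  rewrite -(subnKC qi) exprD mulrCA.
  by apply: (smMr Hd) => //; apply: (OM HO); apply: (Opow HO).
have pn : (p <= p + q - i)%N by lia.
rewrite -(subnKC pn) exprD -mulrA.
by apply: (smMr Hd) => //; apply: (OM HO); apply: (Opow HO).
Qed.

Lemma nil_sum_big (F : nat -> K) r : (forall j, O (F j)) -> (forall j, exists p, d (F j ^+ p)) ->
  exists p, d ((\sum_(j < r) F j) ^+ p).
Proof.
move=> OF nF; elim: r => [|r [p IH]].
  by exists 1%N; rewrite big_ord0 expr1; apply: (sm0 Hd).
have [q Hq] := nF r; exists (p + q)%N; rewrite big_ord_recr /=.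
apply: nil_add => //; apply: (Osum HO) => i _; exact: OF.
Qed.

Lemma idem_nil h p : O h -> d (h * h - h) -> d (h ^+ p) -> d h.
Proof.
move=> Oh dh; case: p => [|p] dp.
  by rewrite -[h]mulr1; apply: (smM Hd) => //; rewrite -(expr0 h).
have := idem_pow_cong Oh dh (ltn0Sn p) => H.
have -> : h = h ^+ p.+1 - (h ^+ p.+1 - h) by ring.
by apply: (smB HO Hd).
Qed.

Lemma orth_sum r (e A B : nat -> K) : (forall p, O (e p)) ->
  (forall p q, p != q -> d (e p * e q)) -> (forall p, d (e p * e p - e p)) ->
  (forall p q, O (A p * B q)) ->
  d ((\sum_(p < r) e p * A p) * (\sum_(q < r) e q * B q) - \sum_(p < r) e p * (A p * B p)).
Proof.
move=> Oe orth idem OAB.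
rewrite mulr_suml -sumrB; apply: (smsum Hd) => p _.
rewrite mulr_sumr (bigD1 p) //= addrAC.
apply: (smD Hd).
  have -> : e p * A p * (e p * B p) - e p * (A p * B p) = (e p * e p - e p) * (A p * B p) by ring.
  exact: (smMr Hd).
apply: (smsum Hd) => q qp.
have -> : e p * A p * (e q * B q) = (e p * e q) * (A p * B q) by ring.
apply: (smMr Hd) => //; apply: orth.
by apply: contraNneq qp => /val_inj ->.
Qed.

End Core.
Section CoreG.
Variable K : fieldExtType rat.
Variable O : K -> Prop.
Hypothesis HO : is_order O.
Variables d m a a' : K -> Prop.
Hypothesis Hd0 : is_int_ideal O d.
Hypothesis Hm0 : is_int_ideal O m.
Hypothesis dm : sub_incl d m.
Hypothesis Ha : is_submodule O a.
Hypothesis Ha' : is_submodule O a'.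
Hypothesis aa'O : forall u v, a u -> a' v -> O (u * v).
Variable N : int.
Hypothesis N0 : 0 < N.
Hypothesis dN : d N%:~R.
Variables t1 s1 : K.
Hypothesis at1 : a t1.
Hypothesis as1 : a' s1.
Hypothesis mts : m (t1 * s1 - 1).
Variable n : nat.
Variables x y : 'I_n -> K.
Hypothesis ax : forall i, a (x i).
Hypothesis ay : forall i, a' (y i).
Hypothesis xy1 : \sum_i x i * y i = 1.

Let Hd : is_submodule O d. Proof. by case: Hd0. Qed.
Let Hm : is_submodule O m. Proof. by case: Hm0. Qed.
Let mO : sub_incl m O. Proof. by case: Hm0. Qed.

Definition Tf (j : nat) : K := match j with 0 => t1 | j'.+1 => oapp x 0 (insub j') end.
Definition Sf (j : nat) : K := match j with 0 => s1 | j'.+1 => oapp y 0 (insub j') end.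
Definition uf j := Tf j * Sf j.

Lemma aT j : a (Tf j).
Proof. case: j => [|j] //=; case: insubP => [i _ _|_] /=; [exact: ax | exact: (sm0 Ha)]. Qed.
Lemma aS j : a' (Sf j).
Proof. case: j => [|j] //=; case: insubP => [i _ _|_] /=; [exact: ay | exact: (sm0 Ha')]. Qed.
Lemma Ou j : O (uf j). Proof. exact: aa'O (aT j) (aS j). Qed.
Lemma TfS (i : 'I_n) : Tf i.+1 = x i. Proof. by rewrite /= valK. Qed.
Lemma SfS (i : 'I_n) : Sf i.+1 = y i. Proof. by rewrite /= valK. Qed.
Lemma TfS0 j : (n <= j)%N -> Tf j.+1 = 0.
Proof. by move=> nj /=; rewrite insubF // ltnNge nj. Qed.

Lemma Hk j : exists k, (0 < k)%N /\ d (uf j ^+ (k + k) - uf j ^+ k).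
Proof. have H := Ou j. have := idem_pow HO Hd0 N0 dN H. done. Qed.

Definition kf j := proj1_sig (constructive_indefinite_description _ (Hk j)).
Lemma kfP j : (0 < kf j)%N /\ d (uf j ^+ (kf j + kf j) - uf j ^+ kf j).
Proof. by rewrite /kf; case: constructive_indefinite_description. Qed.

Definition gf j := uf j ^+ kf j.
Definition wf j := uf j ^+ (kf j).-1.
Definition Pf j := \prod_(l < j) (1 - gf l).
Definition ef j := gf j * Pf j.

Lemma Og j : O (gf j). Proof. by apply: (Opow HO); apply: Ou. Qed.
Lemma Ow j : O (wf j). Proof. by apply: (Opow HO); apply: Ou. Qed.
Lemma O1g j : O (1 - gf j). Proof. by apply: (OB HO); [exact: O1 | exact: Og]. Qed.
Lemma OP j : O (Pf j). Proof. by apply: (@Oprod _ _ HO (fun l => 1 - gf l)) => l; apply: O1g. Qed.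
Lemma Oe j : O (ef j). Proof. exact: (OM HO) (Og j) (OP j). Qed.
Lemma dg j : d (gf j * gf j - gf j).
Proof. by rewrite /gf -exprD; case: (kfP j). Qed.
Lemma uw j : uf j * wf j = gf j.
Proof. by rewrite /wf /gf -exprS prednK //; case: (kfP j). Qed.
Lemma dP j : d (Pf j * Pf j - Pf j).
Proof. exact: (idem_prod HO Hd0 j Og dg). Qed.
Lemma de j : d (ef j * ef j - ef j).
Proof. exact: (idem_mul HO Hd0 (Og j) (OP j) (dg j) (dP j)). Qed.

Lemma dgc j : d (gf j * (1 - gf j)).
Proof.
have -> : gf j * (1 - gf j) = - (gf j * gf j - gf j) by ring.
exact: (smN HO Hd (dg j)).
Qed.

Lemma Pf_split j r : (j < r)%N -> exists R, O R /\ Pf r = (1 - gf j) * R.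
Proof.
move=> jr; exists (\prod_(l < r | l != Ordinal jr) (1 - gf l)); split.
  by apply: (Oprod_cond HO) => l; apply: O1g.
by rewrite /Pf (bigD1 (Ordinal jr)).
Qed.

Lemma orth_e p q : p != q -> d (ef p * ef q).
Proof.
wlog: p q / (p < q)%N.
  move=> H pq; case: (ltngtP p q) => [lt|lt|e]; first exact: H.
    by rewrite mulrC; apply: H => //; rewrite eq_sym.
  by rewrite e eqxx in pq.
move=> pq _; have [R [OR PE]] := Pf_split pq.
have -> : ef p * ef q = (gf p * (1 - gf p)) * (Pf p * gf q * R).
  by rewrite /ef PE; ring.
apply: (smMr Hd); last exact: dgc.
by apply: (OM HO) => //; apply: (OM HO); [apply: OP | apply: Og].
Qed.

Lemma telescope r : \sum_(j < r) ef j = 1 - Pf r.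
Proof.
elim: r => [|r IH]; first by rewrite big_ord0 /Pf big_ord0 subrr.
by rewrite big_ord_recr /= IH /ef /Pf big_ord_recr /=; ring.
Qed.

Lemma dh : d (Pf n.+1).
Proof.
have Oh := OP n.+1; have dhh := dP n.+1.
have nil j : exists p, d ((Pf n.+1 * uf j.+1) ^+ p).
  case: (ltnP j n) => jn.
    exists (kf j.+1); rewrite exprMn.
    have [kpos _] := kfP j.+1.
    have -> : Pf n.+1 ^+ kf j.+1 * uf j.+1 ^+ kf j.+1 =
      (Pf n.+1 ^+ kf j.+1 - Pf n.+1) * gf j.+1 + Pf n.+1 * gf j.+1 by rewrite /gf mulrBl subrK.
    apply: (smD Hd).
      by apply: (smMr Hd); [apply: Og | exact: (idem_pow_cong Hd0 Oh dhh kpos)].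
    have [R [OR ->]] := Pf_split (jn : (j.+1 < n.+1)%N).
    have -> : (1 - gf j.+1) * R * gf j.+1 = (gf j.+1 * (1 - gf j.+1)) * R by ring.
    by apply: (smMr Hd) => //; apply: dgc.
  exists 1%N; rewrite expr1 /uf TfS0 // mul0r mulr0; exact: (sm0 Hd).
have OF j : O (Pf n.+1 * uf j.+1) by apply: (OM HO) => //; apply: Ou.
have [p Hp] := nil_sum_big HO Hd0 n OF nil.
have sumE : \sum_(j < n) Pf n.+1 * uf j.+1 = Pf n.+1.
  rewrite -mulr_sumr -[RHS]mulr1 -xy1; congr (_ * _).
  by apply: eq_bigr => i _; rewrite /uf TfS SfS.
rewrite sumE in Hp; exact: (idem_nil HO Hd0 Oh dhh Hp).
Qed.

Lemma mg0 : m (1 - gf 0).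
Proof.
have mu : m (uf 0 - 1) by [].
have Ou0 := Ou 0.
suff H k : m (uf 0 ^+ k - 1).
  have -> : 1 - gf 0 = - (uf 0 ^+ kf 0 - 1) by rewrite /gf opprB.
  exact: (smN HO Hm).
elim: k => [|k IH]; first by rewrite expr0 subrr; apply: (sm0 Hm).
have -> : uf 0 ^+ k.+1 - 1 = uf 0 * (uf 0 ^+ k - 1) + (uf 0 - 1) by rewrite exprS mulrBr mulr1 addrA subrK.
by apply: (smD Hm) => //; apply: (smM Hm).
Qed.

Lemma core_exists : exists t s,
  [/\ a t, a' s, d (t * s - 1) & forall z, a' z -> m ((t - t1) * z)].
Proof.
pose r := n.+1.
pose t := \sum_(j < r) ef j * Tf j.
pose s0 := \sum_(j < r) ef j * Sf j.
pose W := \sum_(j < r) ef j * wf j.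
have OW : O W by apply: (Osum HO) => j _; apply: (OM HO); [apply: Oe | apply: Ow].
exists t, (s0 * W); split.
- by apply: (smsum Ha) => j _; apply: (smM Ha); [apply: Oe | apply: aT].
- apply: (smMr Ha') => //.
  by apply: (smsum Ha') => j _; apply: (smM Ha'); [apply: Oe | apply: aS].
- have D1 := orth_sum Hd0 r Oe orth_e de (fun p q => aa'O (aT p) (aS q)).
  have OuW p q : O (uf p * wf q) by apply: (OM HO); [apply: Ou | apply: Ow].
  have D2 := orth_sum Hd0 r Oe orth_e de OuW.
  have D3 : d (\sum_(p < r) ef p * gf p - \sum_(p < r) ef p).
    rewrite -sumrB; apply: (smsum Hd) => p _.
    rewrite /ef mulrAC -mulrBl; apply: (smMr Hd); [apply: OP | apply: dg].
  have D4 := telescope r.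
  have D5 := dh.
  have E1 : \sum_(p < r) ef p * (uf p * wf p) = \sum_(p < r) ef p * gf p.
    by apply: eq_bigr => p _; rewrite uw.
  rewrite E1 in D2.
  set A := \sum_(p < r) ef p * (Tf p * Sf p) in D1.
  have AE : A = \sum_(p < r) ef p * uf p by [].
  rewrite -AE in D2.
  set G := \sum_(p < r) ef p * gf p in D2 D3.
  set Es := \sum_(p < r) ef p in D3 D4.
  have -> : t * (s0 * W) - 1 = (t * s0 - A) * W + (A * W - G) + (G - Es) + (Es - 1).
    by ring.
  apply: (smD Hd); last first.
    have -> : Es - 1 = - Pf r by rewrite D4; ring.
    exact: (smN HO Hd).

  apply: (smD Hd) => //. apply: (smD Hd) => //.
  exact: (smMr Hd).
- move=> z az.
  have Oz j : O (Tf j * z) by apply: aa'O => //; apply: aT.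
  rewrite /t big_ord_recl; set S := \sum_(i < n) _.
  have -> : (ef 0 * Tf 0 + S - t1) * z = - ((1 - gf 0) * (t1 * z)) + S * z.
    by rewrite /ef /Pf big_ord0 /=; ring.
  apply: (smD Hm).
    by apply: (smN HO Hm); apply: (smMr Hm); [exact: (Oz 0%N) | exact: mg0].
  rewrite /S mulr_suml; apply: (smsum Hm) => i _.
  have [R [OR PE]] := Pf_split (ltn0Sn i : (0 < i.+1)%N).
  have -> : (lift ord0 i : nat) = i.+1 by [].
  rewrite /ef PE.
  have -> : gf i.+1 * ((1 - gf 0) * R) * Tf i.+1 * z = (1 - gf 0) * (gf i.+1 * R * (Tf i.+1 * z)) by ring.
  apply: (smMr Hm); last exact: mg0.
  by apply: (OM HO); [apply: (OM HO); [apply: Og | exact: OR] | exact: Oz].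
Qed.

End CoreG.
From mathcomp Require polyrcf.
Section Bound.
Variable K : fieldExtType rat.
Variable R : realType.

Lemma rho_bound (t : K) : exists B : R, forall rho : {rmorphism K -> R}, `|rho t| < B.
Proof.
have /polyOver1P [q Hq] := minPolyOver 1%AS t.
have q0 : q != 0.
  apply: contraTneq (monic_minPoly 1%AS t) => q0.
  by rewrite Hq q0 map_poly0 monicE lead_coef0 eq_sym oner_eq0.
pose p := map_poly (ratr : rat -> R) q.
have p0 : p != 0 by rewrite map_poly_eq0.
exists (polyrcf.cauchy_bound p) => rho.
apply: polyrcf.cauchy_boundP => //.
have E : map_poly rho (minPoly 1%AS t) = p.
  rewrite Hq -map_poly_comp; apply: eq_map_poly => c /=.
  have -> : c%:A = in_alg K c by [].
  by rewrite (fmorph_eq_rat (in_alg K)) fmorph_rat.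
by rewrite -E horner_map minPolyxx rmorph0.
Qed.
End Bound.
Section Assembly.
Variable K : fieldExtType rat.
Variable O : K -> Prop.
Hypothesis HO : is_order O.

Definition scaled (a : K -> Prop) (l : K) : K -> Prop := fun x => exists y, a y /\ x = y * l.

Lemma scaled_submod a l : is_submodule O a -> is_submodule O (scaled a l).
Proof.
move=> Ha; split.
- by exists 0; split; [exact: (sm0 Ha) | rewrite mul0r].
- by move=> _ _ [u [au ->]] [v [av ->]]; exists (u + v); split; [exact: (smD Ha) | rewrite mulrDl].
- by move=> r _ Or [u [au ->]]; exists (r * u); split; [exact: (smM Ha) | rewrite mulrA].
Qed.

Lemma scaled_frac a l : l != 0 -> is_frac_ideal O a -> is_frac_ideal O (scaled a l).
Proof.
move=> l0 [Ha [la [la0 Hla]]]; split; first exact: scaled_submod.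
exists (la * l^-1); split; first by rewrite mulf_neq0 // invr_eq0.
by move=> _ [y [ay ->]]; rewrite mulrACA mulVf // mulr1; apply: Hla.
Qed.

Lemma scaled_mul a a' l : l != 0 -> is_submodule O a -> is_submodule O a' ->
  sub_eq (ideal_mul a a') O -> sub_eq (ideal_mul (scaled a l) (scaled a' l^-1)) O.
Proof.
move=> l0 Ha Ha' Hinv z; split.
  apply: (ideal_mul_sub (O_submod HO)) => _ _ [u [au ->]] [v [av ->]].
  rewrite mulrACA mulfV // mulr1; apply/(Hinv _).1; exact: mul1_in.
move=> /(Hinv _).2 [k [p [q [Hpq ->]]]].
exists k, (fun i => p i * l), (fun i => q i * l^-1); split.
  by move=> i; case: (Hpq i) => ap aq; split; [exists (p i) | exists (q i)].
by apply: eq_bigr => i _; rewrite mulrACA mulfV // mulr1.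
Qed.

Lemma ideal_mul_eql (a b c : K -> Prop) : sub_eq a b -> forall z, ideal_mul a c z -> ideal_mul b c z.
Proof.
move=> E z [k [p [q [H ->]]]]; exists k, p, q; split => // i.
by case: (H i) => ap cq; split => //; apply/(E _).1.
Qed.

Lemma frac_eq a b : sub_eq a b -> is_frac_ideal O b -> is_frac_ideal O a.
Proof.
move=> E [[b0 bD bM] [l [l0 Hl]]]; split; last by exists l; split => // x /(E x).1 /Hl.
split; first exact/(E _).2.
- by move=> u v /(E _).1 au /(E _).1 av; apply/(E _).2; apply: bD.
- by move=> r u Or /(E _).1 au; apply/(E _).2; apply: bM.
Qed.

Lemma inv_eq a b : sub_eq a b -> invertible O b -> invertible O a.
Proof.
move=> E [Fb [b' [Fb' Hm]]]; split; first exact: frac_eq Fb.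
exists b'; split => // z; split.
  by move=> /(ideal_mul_eql E) /(Hm z).1.
move=> /(Hm z).2; apply: ideal_mul_eql => x; split; [exact: (E x).2 | exact: (E x).1].
Qed.

Lemma nonzero_of_inv b : invertible O b -> exists s, b s /\ s != 0.
Proof.
move=> [_ [b' [_ Hm]]]; have := (Hm 1).2 (O1 HO).
case=> k [p [q [Hpq E]]].
case: (boolP [exists i, p i != 0]) => [/existsP [i pi]|/existsPn H].
  by exists (p i); split => //; case: (Hpq i).
suff : (1 : K) = 0 by move/eqP; rewrite oner_eq0.
rewrite E big1 // => i _.
by have := H i; rewrite negbK => /eqP ->; rewrite mul0r.
Qed.

End Assembly.
Unset Implicit Arguments.
Theorem lemma5p12 (K : fieldExtType rat) (O m d : K -> Prop)
  (R : realType) (Sigma : {rmorphism K -> R} -> Prop) :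
  is_order O ->
  is_int_ideal O m -> (exists x, m x /\ x != 0) ->
  is_int_ideal O d -> (exists x, d x /\ x != 0) ->
  sub_incl d m ->
  [/\ (* the inclusion J*_d ⊆ J*_m *)
      (forall a, Jstar O d a -> Jstar O m a),
      (* P^d_{m,Σ} is contained in J*_d *)
      (forall a, Pray_d O m d Sigma a -> Jstar O d a),
      (* the kernel of J*_d -> Cl_{m,Σ} is P^d_{m,Σ} *)
      (forall a, Jstar O d a -> (Pray O m Sigma a <-> Pray_d O m d Sigma a)) &
      (* surjectivity: every class of J*_m contains an element of J*_d *)
      (forall a, Jstar O m a ->
         exists b c, [/\ Jstar O d b, Pray O m Sigma c & sub_eq a (ideal_mul b c)])].
Proof.
move=> HO Hm0 [xm [mxm xm0]] Hd0 [xd [dxd xd0]] dm.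
have [Hm mO] := Hm0; have [Hd dO] := Hd0.
split.
- move=> a [Fa [Ia Ca]]; split => //; split => //.
  exact: (coprime_frac_mono HO Hm0 dm Ca).
- move=> a [[alpha [a0 cg pos Eq]] Cd]; split; first exact: frac_eq Eq (principal_frac HO a0).
  by split => //; exact: inv_eq Eq (principal_inv HO a0).
- move=> a [_ [_ Cd]]; split; first by move=> P; split.
  by case.
move=> a [Fa [[_ [a' [Fa' Hinv]]] [a1 [b1 [Ia1 [Ib1 Invb1] Ca1m Cb1m Eqa]]]]].
have Ha := Fa.1; have Ha' := Fa'.1.
have [Ha1 a1O] := Ia1; have [Hb1 b1O] := Ib1.
have aa'O u v : a u -> a' v -> O (u * v) by move=> au av; apply/(Hinv _).1; exact: mul1_in.
have Hinv' : sub_eq (ideal_mul a' a) O.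
  by move=> z; split => [/ideal_mulC /(Hinv z).1 //|/(Hinv z).2 /ideal_mulC].
have a1a u : a1 u -> a u.
  move=> a1u; apply/(Eqa _).2 => v b1v; apply: (smMr Ha1) => //; exact: b1O.
have b1a' v : b1 v -> a' v.
  move=> b1v; apply: (inv_colon HO Ha' Hinv) => u /(Eqa _).1 /(_ v b1v) /a1O.
  by rewrite mulrC.
have [t1 [mu [a1t1 [mmu E1]]]] := (Ca1m 1).2 (O1 HO).
have Ot1 := a1O _ a1t1.
have mt1 : m (t1 - 1) by rewrite E1 opprD addrA subrr sub0r; apply: (smN HO Hm).
have [s1 [b1s1 s10 ms1]] : exists s1, [/\ b1 s1, s1 != 0 & m (s1 - 1)].
  have [s1 [mu' [b1s1 [mmu' E2]]]] := (Cb1m 1).2 (O1 HO).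
  have ms1 : m (s1 - 1) by rewrite E2 opprD addrA subrr sub0r; apply: (smN HO Hm).
  case: (eqVneq s1 0) => [s10|s10]; last by exists s1.
  have m1 : m 1 by move: mmu'; rewrite E2 s10 add0r.
  have [s [b1s s0]] := nonzero_of_inv HO Invb1.
  exists s; split => //; rewrite -[s - 1]mulr1; apply: (smM Hm) => //.
  by apply: (OB HO); [exact: b1O | exact: (O1 HO)].
have Os1 := b1O _ b1s1; have a's1 := b1a' _ b1s1.
have mts : m (t1 * s1 - 1).
  have -> : t1 * s1 - 1 = (t1 - 1) * s1 + (s1 - 1) by ring.
  by apply: (smD Hm) => //; apply: (smMr Hm).
have [n [x [y [Hxy xy1]]]] := (Hinv 1).2 (O1 HO).
have ax i : a (x i) by case: (Hxy i).
have ay i : a' (y i) by case: (Hxy i).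
have [N [N0 dN]] := int_in_ideal HO Hd0 dxd xd0.
have [t [s [at0 a's dts mt]]] := core_exists HO Hd0 Hm0 Ha Ha' aa'O N0 dN (a1a _ a1t1) a's1 mts ax ay (esym xy1).
have [x0 [ax0 x00]] := nonzero_of_inv HO (conj Fa (ex_intro _ a' (conj Fa' Hinv))).
have a1x0s1 : a1 (x0 * s1) by apply: (Eqa x0).1.
have [N1 [N10 a1N1]] := int_in_ideal HO Ia1 a1x0s1 (mulf_neq0 x00 s10).
pose P := (N * N1)%Z.
have P0 : 0 < P by rewrite /P mulr_gt0.
pose c : K := P%:~R.
have ac : a c by rewrite /c /P intrM; apply: (smM Ha); [exact: (Oz HO) | exact: a1a].
have dcs : d (c * s).
  rewrite /c /P intrM -mulrA; apply: (smMr Hd) => //; apply: aa'O => //; exact: a1a.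
have mcz z : a' z -> m (c * z).
  move=> a'z; rewrite /c /P intrM -mulrA; apply: (smMr Hm); last exact: dm.
  apply: aa'O => //; exact: a1a.
have c0 : c != 0.
  by rewrite /c -(rmorph_int (in_alg K)) fmorph_eq0 intr_eq0 gt_eqF.
have [B HB] := rho_bound R t.
pose k0 := Num.bound `|B|.
have Bk0 : B < k0%:R by apply: (le_lt_trans (ler_norm B)); apply: archi_boundP.
have [k [Bk tk0]] : exists k : nat, B < k%:R /\ t + k%:R * c != 0.
  case: (eqVneq (t + k0%:R * c) 0) => [E|E]; last by exists k0.
  exists k0.+1; split; first by rewrite (lt_le_trans Bk0) // ler_nat.
  by rewrite mulrSr mulrDl mul1r addrA E add0r.
pose alpha := t + k%:R * c.
have aal : a alpha by apply: (smD Ha) => //; apply: (smM Ha) => //; apply: (On HO).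
have dal : d (alpha * s - 1).
  have -> : alpha * s - 1 = (t * s - 1) + k%:R * (c * s) by rewrite /alpha; ring.
  by apply: (smD Hd) => //; apply: (smM Hd) => //; apply: (On HO).
have mal z : a' z -> m ((alpha - t1) * z).
  move=> a'z; have -> : (alpha - t1) * z = (t - t1) * z + k%:R * (c * z) by rewrite /alpha; ring.
  by apply: (smD Hm); [exact: mt | apply: (smM Hm); [apply: (On HO) | exact: mcz]].
have posal (rho : {rmorphism K -> R}) : 0 < rho alpha.
  have := HB rho; rewrite ltr_norml => /andP [h1 _].
  rewrite /alpha rmorphD rmorphM rmorph_nat /c rmorph_int.
  have h3 : 1 <= (P%:~R : R) by rewrite ler1z.
  have h4 : k%:R <= k%:R * (P%:~R : R) by rewrite ler_peMr.
  lra.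
have al0 : alpha != 0 by [].
have cgal : Defs.congr1 O m alpha.
  rewrite /Defs.congr1.
  have -> : alpha - 1 = ((alpha - 1) * s1) * s1^-1 by rewrite mulfK.
  apply: mul1_in.
    have -> : (alpha - 1) * s1 = (alpha - t1) * s1 + (t1 - 1) * s1 by ring.
    by apply: (smD Hm); [exact: mal | apply: (smMr Hm)].
  exists 1, s1; split; first exact: (O1 HO).
  split; last by rewrite mul1r.
  split => //; move=> z; split.
    by case=> u [v [[w [Ow ->]] [mv ->]]]; apply: (OD HO); [apply: (OM HO) | apply: mO].
  move=> Oz; exists (s1 * z), ((1 - s1) * z); split; first by exists z.
  split; last by ring.
  apply: (smMr Hm) => //; rewrite -opprB; exact: (smN HO Hm).
pose b := scaled a alpha^-1.
pose b2 := scaled a' alpha.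
have alv0 : alpha^-1 != 0 by rewrite invr_eq0.
have Fb : is_frac_ideal O b := scaled_frac alv0 Fa.
have Fb2 : is_frac_ideal O b2 := scaled_frac al0 Fa'.
have Hbb2 : sub_eq (ideal_mul b b2) O.
  have := scaled_mul HO alv0 Ha Ha' Hinv; rewrite invrK; exact.
have Hb2b : sub_eq (ideal_mul b2 b) O.
  by move=> z; split => [/ideal_mulC /(Hbb2 z).1 //|/(Hbb2 z).2 /ideal_mulC].
exists b, (principal O alpha); split.
- split => //; split; first by split => //; exists b2.
  exists O, b2; split.
  + exact: (submod_int_ideal_O HO).
  + split; last by split => //; exists b.
    split; first exact: Fb2.1.
    by move=> _ [v [a'v ->]]; rewrite mulrC; apply: aa'O.
  + move=> z; split; first by case=> u [v [Ou [dv ->]]]; apply: (OD HO) => //; apply: dO.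
    by move=> Oz; exists z, 0; split => //; split; [exact: (sm0 Hd) | rewrite addr0].
  + move=> z; split; first by case=> u [v [[w [a'w ->]] [dv ->]]]; apply: (OD HO); [rewrite mulrC; apply: aa'O | apply: dO].
    move=> Oz; exists ((s * z) * alpha), (z * (1 - alpha * s)); split.
      by exists (s * z); split => //; apply: (smMr Ha').
    split; last by ring.
    apply: (smM Hd) => //; rewrite -opprB; exact: (smN HO Hd).
  + move=> z; split.
      by case=> w [aw ->] _ [v [a'v ->]]; rewrite mulrACA mulVf // mulr1; apply: aa'O.
    move=> Hz; exists (z * alpha); split; last by rewrite mulfK.
    apply: (inv_colon HO Ha Hinv') => v a'v.
    by rewrite mulrAC -mulrA; apply: Hz; exists v.
- by exists alpha; split.
- move=> z; split.
    move=> az; have -> : z = (z * alpha^-1) * (alpha * 1) by rewrite mulr1 mulfVK.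
    by apply: mul1_in; [exists z | exists 1; split => //; exact: (O1 HO)].
  apply: (ideal_mul_sub Ha) => _ _ [w [aw ->]] [o [Oo ->]].
  by rewrite mulrA mulfVK //; apply: (smMr Ha).
Qed.
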